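(* Let $G$ be a simple undirected graph of order $n\geq 6$ such that $\rho(G)\geq \rho(K_{2,n-2})$. Then $G$ contains a chorded cycle unless $G\cong K_{2,n-2}$.
   Context: All graphs are finite, simple and undirected. $\rho(G)$ denotes the spectral radius of $G$, i.e. the largest eigenvalue of its adjacency matrix $A(G)=(a_{u,v})$, where $a_{u,v}=1$ if $u,v$ are adjacent and $a_{u,v}=0$ otherwise. $K_{2,n-2}$ is the complete bipartite graph with parts of sizes $2$ and $n-2$. A chord of a cycle $C$ is an edge joining two non-consecutive vertices of $C$. A cycle $C$ in a graph $G$ is chorded if the subgraph of $G$ induced by the vertex set of $C$ contains at least one chord of $C$. *)

(* Defs.v *)
From HB Require Import structures.
From mathcomp Require Import all_boot all_order all_algebra all_fingroup.
From mathcomp Require Import reals.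
Set Implicit Arguments. Unset Strict Implicit. Unset Printing Implicit Defensive.
Import Order.TTheory GRing.Theory Num.Theory.
Local Open Scope ring_scope.

Definition simple_graph (n : nat) (g : rel 'I_n) : Prop :=
  symmetric g /\ irreflexive g.

Definition adjmx (R : realType) (n : nat) (g : rel 'I_n) : 'M[R]_n :=
  \matrix_(i, j) (g i j)%:R.

Definition is_spectral_radius (R : realType) (n : nat) (A : 'M[R]_n) (r : R) : Prop :=
  eigenvalue A r /\ (forall a : R, eigenvalue A a -> a <= r).

(* K_{2,n-2} on 'I_n: parts {0,1} and {2,...,n-1}. *)
Definition K2 (n : nat) : rel 'I_n := fun i j => (i < 2)%N != (j < 2)%N.

Definition graph_iso (n : nat) (g h : rel 'I_n) : Prop :=
  exists f : {perm 'I_n}, forall i j, g i j = h (f i) (f j).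

Definition is_cycle (n : nat) (g : rel 'I_n) (c : seq 'I_n) : Prop :=
  (3 <= size c)%N /\ uniq c /\ path.cycle g c.

Definition has_chord (n : nat) (g : rel 'I_n) (c : seq 'I_n) : Prop :=
  exists x y, [/\ x \in c, y \in c, g x y, y != next c x & x != next c y].

Definition has_chorded_cycle (n : nat) (g : rel 'I_n) : Prop :=
  exists c, is_cycle g c /\ has_chord g c.

(* Main.v *)
Require Import Defs.
From HB Require Import structures.
From mathcomp Require Import all_boot all_order all_algebra all_fingroup.
From mathcomp Require Import reals.
From mathcomp Require Import lra zify.
From Stdlib Require Import Classical.
Set Implicit Arguments. Unset Strict Implicit. Unset Printing Implicit Defensive.
Import Order.TTheory GRing.Theory Num.Theory.
Local Open Scope ring_scope.
Section Comb.
Variable n : nat.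
Variable g : rel 'I_n.
Hypothesis gsym : symmetric g.
Hypothesis girr : irreflexive g.
Hypothesis NCC : ~ has_chorded_cycle g.

Lemma adj_neq x y : g x y -> x != y.
Proof. by apply: contraTneq => ->; rewrite girr. Qed.

Lemma chord02 (x0 x1 x2 x3 : 'I_n) rest :
  uniq [:: x0, x1, x2, x3 & rest] -> path.cycle g [:: x0, x1, x2, x3 & rest] ->
  g x0 x2 -> False.
Proof.
move=> U C ch; apply: NCC; exists [:: x0, x1, x2, x3 & rest]; split.
  by split.
have /= := U => /andP[H0 /andP[H1 _]].
have n02 : x0 != x2 by apply: contraNneq H0 => ->; rewrite !inE eqxx ?orbT.
have n03 : x0 != x3 by apply: contraNneq H0 => ->; rewrite !inE eqxx ?orbT.
have n12 : x1 != x2 by apply: contraNneq H1 => ->; rewrite !inE eqxx ?orbT.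
exists x0, x2; split => //; rewrite ?inE ?eqxx ?orbT //=.
- by rewrite eqxx eq_sym.
- by rewrite (eq_sym x2 x0) (negbTE n02) (eq_sym x2 x1) (negbTE n12) eqxx.
Qed.

Lemma chord03 (x0 x1 x2 x3 x4 : 'I_n) rest :
  uniq [:: x0, x1, x2, x3, x4 & rest] -> path.cycle g [:: x0, x1, x2, x3, x4 & rest] ->
  g x0 x3 -> False.
Proof.
move=> U C ch; apply: NCC; exists [:: x0, x1, x2, x3, x4 & rest]; split.
  by split.
have /= := U => /andP[H0 /andP[H1 /andP[H2 _]]].
have n01 : x0 != x1 by apply: contraNneq H0 => ->; rewrite !inE eqxx ?orbT.
have n03 : x0 != x3 by apply: contraNneq H0 => ->; rewrite !inE eqxx ?orbT.
have n04 : x0 != x4 by apply: contraNneq H0 => ->; rewrite !inE eqxx ?orbT.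
have n13 : x1 != x3 by apply: contraNneq H1 => ->; rewrite !inE eqxx ?orbT.
have n23 : x2 != x3 by apply: contraNneq H2 => ->; rewrite !inE eqxx ?orbT.
exists x0, x3; split => //; rewrite ?inE ?eqxx ?orbT //=.
- by rewrite eqxx eq_sym.
- by rewrite (eq_sym x3 x0) (negbTE n03) (eq_sym x3 x1) (negbTE n13) (eq_sym x3 x2) (negbTE n23) eqxx.
Qed.

Lemma cyc4 a b c d : a != b -> a != c -> a != d -> b != c -> b != d -> c != d ->
  g a b -> g b c -> g c d -> g d a -> g a c -> False.
Proof.
move=> ab ac ad bc bd cd *; apply: (@chord02 a b c d [::]) => //=.
  by rewrite !inE !negb_or ab ac ad bc bd cd.
by rewrite andbT; apply/and4P.
Qed.

Lemma cyc5 a b c d e : a != b -> a != c -> a != d -> a != e -> b != c -> b != d -> b != e ->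
  c != d -> c != e -> d != e ->
  g a b -> g b c -> g c d -> g d e -> g e a -> g a c -> False.
Proof.
move=> ab ac ad ae bc bd be cd ce de *; apply: (@chord02 a b c d [:: e]) => //=.
  by rewrite !inE !negb_or ab ac ad ae bc bd be cd ce de.
by rewrite andbT; apply/and5P.
Qed.

Lemma cyc6 a b c d e f : a != b -> a != c -> a != d -> a != e -> a != f ->
  b != c -> b != d -> b != e -> b != f ->
  c != d -> c != e -> c != f -> d != e -> d != f -> e != f ->
  g a b -> g b c -> g c d -> g d e -> g e f -> g f a -> g a d -> False.
Proof.
move=> ab ac ad ae af bc bd be bf cd ce cf de df ef *.
apply: (@chord03 a b c d e [:: f]) => //=.
  by rewrite !inE !negb_or ab ac ad ae af bc bd be bf cd ce cf de df ef.
by rewrite andbT; do 5 (apply/andP; split => //).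
Qed.
End Comb.

Lemma exists_other1 (T : finType) (A : {set T}) a : (1 < #|A|)%N ->
  exists2 x, x \in A & x != a.
Proof.
move=> c; case: (boolP [exists x, (x \in A) && (x != a)]).
  by move/existsP => [x /andP[]]; exists x.
move/existsPn => H.
have : A \subset [set a].
  by apply/subsetP => x xA; move: (H x); rewrite inE xA /= => /negPn.
by move/subset_leq_card; rewrite cards1; case: #|A| c => // [[]].
Qed.

Lemma exists_other2 (T : finType) (A : {set T}) a b : (2 < #|A|)%N ->
  exists x, [/\ x \in A, x != a & x != b].
Proof.
move=> c; case: (boolP [exists x, [&& x \in A, x != a & x != b]]).
  by move/existsP => [x /and3P[]]; exists x.
move/existsPn => H.
have : A \subset [set a; b].
  apply/subsetP => x xA; move: (H x); rewrite !inE xA /= negb_and !negbK.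
  by case/orP => ->; rewrite ?orbT.
move/subset_leq_card; rewrite cards2; case: (a != b); lia.
Qed.

Lemma sum_nat_card (T : finType) (X : {set T}) (P : pred T) :
  (\sum_(v in X) (P v : nat) = #|[set v in X | P v]|)%N.
Proof.
rewrite (eq_bigr (fun v => if P v then 1 else 0)%N); last by move=> i _; case: (P i).
rewrite -big_mkcondr sum1_card; apply: eq_card => v; by rewrite !inE.
Qed.

Lemma sum_tight (T : finType) (A : {set T}) (f : T -> nat) m :
  (forall i, i \in A -> f i <= m)%N -> (m * #|A| <= \sum_(i in A) f i)%N ->
  forall i, i \in A -> f i = m.
Proof.
move=> le tot i iA.
have h0 : (\sum_(i in A) (m - f i) = 0)%N.
  rewrite sumnB // sum_nat_const.
  have : (\sum_(i in A) f i <= \sum_(i in A) m)%N by apply: leq_sum.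
  rewrite sum_nat_const; lia.
move/eqP: h0; rewrite sum_nat_eq0 => /forallP /(_ i); rewrite iA /= => /eqP.
move: (le i iA); lia.
Qed.

Definition hubs n (g : rel 'I_n) (h1 h2 : 'I_n) :=
  [/\ h1 != h2, ~~ g h1 h2, (forall x, x != h1 -> x != h2 -> g x h1 && g x h2) &
      (forall x y, x != h1 -> x != h2 -> y != h1 -> y != h2 -> ~~ g x y)].

Section Local.
Variable n : nat.
Variable g : rel 'I_n.
Hypothesis gsym : symmetric g.
Hypothesis girr : irreflexive g.
Hypothesis NCC : ~ has_chorded_cycle g.
Variable u : 'I_n.

Definition inS v := g u v && [exists w, g u w && g w v].
Definition Nb := [set v | g u v].
Definition Ss := [set v | inS v].
Definition Np := [set v | g u v && ~~ [exists w, g u w && g w v]].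
Definition Rr := [set w | (w != u) && ~~ g u w].
Definition hasS w := [exists a, inS a && g a w].
Definition RS := [set w | (w != u) && ~~ g u w && hasS w].
Definition Zs := [set w | (w != u) && ~~ g u w && ~~ hasS w].
Definition Aw w := [set v | g u v && g w v].
Definition cN w := #|Aw w|.

Let neq := adj_neq girr.

Lemma NR_neq a w : g u a -> ~~ g u w -> a != w.
Proof. by move=> ha; apply: contraNneq => <-. Qed.

Ltac dis1 := solve [ assumption | by rewrite gsym | by apply: neq | by apply: neq; rewrite gsym
  | by apply: NR_neq | by rewrite eq_sym | by rewrite eq_sym; apply: neq
  | by rewrite eq_sym; apply: neq; rewrite gsym | by rewrite eq_sym; apply: NR_neq ].
Ltac dis := repeat match goal with |- is_true (_ != _) => dis1 | |- is_true (g _ _) => dis1 end.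

Lemma L1 w : g u w -> (cN w <= 1)%N.
Proof.
move=> uw; apply/card_le1_eqP => v v'; rewrite !inE => /andP[uv wv] /andP[uv' wv'].
apply/eqP/negPn/negP => vv'.
by apply: (cyc4 NCC (a:=u) (b:=v) (c:=w) (d:=v')); dis.
Qed.

Lemma L1b w : g u w -> ~~ inS w -> cN w = 0%N.
Proof.
move=> uw nS; apply/eqP; rewrite cards_eq0; apply/eqP/setP => v; rewrite !inE.
apply/negP => /andP[uv wv]; move/negP: nS; apply; rewrite /inS uw /=.
by apply/existsP; exists v; rewrite uv gsym.
Qed.

Lemma L2 w : w \in Rr -> hasS w -> (cN w <= 1)%N.
Proof.
rewrite inE => /andP[wu uw] /existsP[a /andP[/andP[ua /existsP[b /andP[ub ba]]] aw]].
have key : forall v, v \in Aw w -> v = a.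
  move=> v; rewrite inE => /andP[uv wv]; apply/eqP/negPn/negP => va.
  have wa : w != a by rewrite eq_sym NR_neq.
  have wb : w != b by rewrite eq_sym NR_neq.
  have wv' : w != v by rewrite eq_sym NR_neq.
  case: (eqVneq v b) => [vb|vb].
    subst v.
    by apply: (cyc4 NCC (a:=a) (b:=w) (c:=b) (d:=u)); dis.
  by apply: (cyc5 NCC (a:=a) (b:=b) (c:=u) (d:=v) (e:=w)); dis.
apply/card_le1_eqP => x x' /key -> /key ->; done.
Qed.

Lemma L3 w : w \in Zs -> Aw w \subset Np.
Proof.
rewrite inE => /andP[/andP[wu uw] nh]; apply/subsetP => v; rewrite !inE => /andP[uv wv].
rewrite uv /=; apply/negP => ex; move/negP: nh; apply; apply/existsP; exists v.
by rewrite /inS uv ex /= gsym.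
Qed.

Lemma L3c w : w \in Zs -> (cN w <= #|Np|)%N.
Proof. by move=> /L3 /subset_leq_card. Qed.

Lemma L4 z z' a b c : z \in Rr -> z' \in Rr -> z != z' ->
  g u b -> g z b -> g z' b -> g u a -> a != b -> g z a ->
  g u c -> c != a -> c != b -> g z' c -> False.
Proof.
rewrite !inE => /andP[zu uz] /andP[zu' uz'] *.
by apply: (cyc6 NCC (a:=u) (b:=a) (c:=z) (d:=b) (e:=z') (f:=c)); dis.
Qed.

Lemma L5 z z' a b : z \in Rr -> z' \in Rr -> z != z' -> g z z' ->
  g u a -> g u b -> a != b -> g z a -> g z b -> g z' a -> g z' b -> False.
Proof.
rewrite !inE => /andP[zu uz] /andP[zu' uz'] *.
by apply: (cyc4 NCC (a:=z) (b:=b) (c:=z') (d:=a)); dis.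
Qed.


Lemma Zs_Rr z : z \in Zs -> z \in Rr.
Proof. by rewrite !inE => /andP[]. Qed.

Definition Bs := [set z in Zs | 2 < cN z]%N.

Lemma D1 v : g u v -> (#|[set z in Bs | g z v]| <= 1)%N.
Proof.
move=> uv; apply/card_le1_eqP => z z'; rewrite !inE.
move=> /andP[/andP[zZ cz] zv] /andP[/andP[zZ' cz'] z'v].
apply/eqP/negPn/negP => zz'.
have [a aA av] := exists_other1 v (ltnW cz).
have [c [cA ca cv]] := exists_other2 a v cz'.
move: aA cA; rewrite !inE => /andP[ua za] /andP[uc z'c].
apply: (L4 (z:=z) (z':=z') (a:=a) (b:=v) (c:=c)) => //; [by rewrite inE; case/andP: zZ | by rewrite inE; case/andP: zZ' | by rewrite eq_sym].
Qed.

Lemma cN_Np z : z \in Zs -> cN z = (\sum_(v in Np) (g z v : nat))%N.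
Proof.
move=> zZ; rewrite sum_nat_card /cN; apply: eq_card => v; rewrite !inE.
apply/idP/idP.
  move=> H; have : v \in Aw z by rewrite inE.
  move/(subsetP (L3 zZ)) => vN; move: H => /andP[_ ->]; rewrite andbT.
  by move: vN; rewrite inE.
by case/andP => /andP[-> _] ->.
Qed.

Lemma CB_le : (\sum_(z in Bs) cN z <= #|Np|)%N.
Proof.
rewrite (eq_bigr (fun z => \sum_(v in Np) (g z v : nat))%N); last first.
  by move=> z; rewrite inE => /andP[zZ _]; apply: cN_Np.
rewrite exchange_big /= -sum1_card; apply: leq_sum => v vN.
rewrite sum_nat_card; apply: D1; by move: vN; rewrite inE => /andP[].
Qed.

Definition Cs := (\sum_(z in Zs) cN z)%N.
Definition Qs := [set z in Zs | ~~ (2 < cN z)%N].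

Lemma split_C : Cs = (\sum_(z in Bs) cN z + \sum_(z in Qs) cN z)%N.
Proof.
rewrite /Cs (bigID (fun z => 2 < cN z)%N) /=; congr (_ + _)%N; apply: eq_bigl => z; by rewrite !inE.
Qed.

Lemma card_splitZ : #|Zs| = (#|Bs| + #|Qs|)%N.
Proof.
rewrite -!sum1_card (bigID (fun z => 2 < cN z)%N) /=; congr (_ + _)%N; apply: eq_bigl => z; by rewrite !inE.
Qed.

Lemma CQ_le : (\sum_(z in Qs) cN z <= 2 * #|Qs|)%N.
Proof.
rewrite mulnC -sum_nat_const; apply: leq_sum => z; rewrite inE => /andP[_]; lia.
Qed.

Lemma CB0 : #|Bs| = 0%N -> (\sum_(z in Bs) cN z = 0)%N.
Proof. by move/card0_eq => H; rewrite big_pred0 // => z; rewrite H. Qed.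

Lemma Cbound : (2 <= #|Np| -> Cs + 2 <= 2 * #|Zs| + #|Np|)%N.
Proof.
move=> p2; rewrite split_C card_splitZ; have := CQ_le; have := CB_le.
case: (posnP #|Bs|) => [/CB0 ->|]; lia.
Qed.

Lemma Cpz : (Cs <= #|Np| * #|Zs|)%N.
Proof.
rewrite mulnC -sum_nat_const; apply: leq_sum => z; exact: L3c.
Qed.

Lemma Aw_full z : z \in Zs -> cN z = #|Np| -> forall v, v \in Np -> g z v.
Proof.
move=> zZ c v vN; have := subset_cardP c (L3 zZ) v; rewrite vN inE => /andP[_ ->] //.
Qed.

Lemma Ctight : (forall v, ~~ inS v) -> (2 <= #|Np|)%N -> (2 * #|Zs| + #|Np| <= Cs + 2)%N ->
  exists h1 h2, hubs g h1 h2.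
Proof.
move=> noS p2 tot.
have hC := split_C; have hZ := card_splitZ; have hB := CB_le; have hQ := CQ_le.
have hB0 : #|Bs| = 0%N -> (\sum_(z in Bs) cN z = 0)%N by apply: CB0.
have tQ : (2 * #|Qs| <= \sum_(z in Qs) cN z)%N.
  by case: (posnP #|Bs|) => [/hB0|] ; lia.
have allQ := sum_tight (m:=2) (A:=Qs) (f:=cN) (fun i => ltac:(rewrite inE => /andP[_]; lia)) tQ.
have Nb_Np x : g u x -> x \in Np.
  move=> ux; rewrite inE ux /=; have := noS x; by rewrite /inS ux.
have RZ x : x != u -> ~~ g u x -> x \in Zs.
  move=> xu ux; rewrite inE xu ux /=; apply/existsPn => a; by rewrite (negbTE (noS a)).
have RrZ x : x \in Rr -> x \in Zs by rewrite inE => /andP[]; apply: RZ.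
case: (posnP #|Bs|) => [B0|Bpos].
  have p2' : #|Np| = 2%N by move: (hB0 B0); lia.
  have [a [b [aN bN ab]]] : exists a b, [/\ a \in Np, b \in Np & a != b].
    by apply/card_gt1P; rewrite p2'.
  have onlyab x : x \in Np -> (x == a) || (x == b).
    move=> xN; apply/negPn/negP; rewrite negb_or => /andP[xa xb].
    have : (#|[:: a; b; x]| <= #|Np|)%N.
      by apply: subset_leq_card; apply/subsetP => y; rewrite 3!in_cons in_nil orbF => /or3P[] /eqP ->.
    have U : uniq [:: a; b; x] by rewrite /= !inE negb_or ab !(eq_sym _ x) xa xb.
    by rewrite (card_uniqP U) p2'.
  have Zab z : z \in Zs -> g z a && g z b.
    move=> zZ; have zQ : z \in Qs.
      rewrite inE zZ /=; apply/negP => cz.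
      have : z \in Bs by rewrite inE zZ cz.
      by rewrite (card0_eq B0).
    by rewrite !(Aw_full zZ) // allQ.
  have uab : g u a && g u b by move: aN bN; rewrite !inE => /andP[-> _] /andP[-> _].
  have cls x : x != a -> x != b -> (x == u) || (x \in Zs).
    move=> xa xb; case: (eqVneq x u) => //= xu.
    case: (boolP (g u x)) => ux; last by apply: RZ.
    by move: (onlyab x (Nb_Np x ux)); rewrite (negbTE xa) (negbTE xb).
  exists a, b; split => //.
  - move: aN; rewrite inE => /andP[_ /existsPn /(_ b)]; rewrite negb_and.
    case/andP: uab => _ -> /=; by rewrite gsym.
  - move=> x xa xb; case/orP: (cls x xa xb) => [/eqP ->|/Zab //].
    exact: uab.
  - move=> x y xa xb ya yb; apply/negP => xy.
    case/orP: (cls x xa xb) => [/eqP xu|xZ]; case/orP: (cls y ya yb) => [/eqP yu|yZ].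
    + by move: xy; rewrite xu yu girr.
    + by move: yZ; rewrite inE -xu xy andbF.
    + by move: xZ; rewrite inE gsym -yu xy andbF.
    case: (eqVneq x y) => [xy'|xy']; first by move: xy; rewrite xy' girr.
    case/andP: uab => ua ub; case/andP: (Zab x xZ) => xa' xb'; case/andP: (Zab y yZ) => ya' yb'.
    by apply: (L5 (z:=x) (z':=y) (a:=a) (b:=b)) => //; apply: Zs_Rr.
have B1 : #|Bs| = 1%N by lia.
have [z0 z0B] : exists z0, z0 \in Bs by apply/card_gt0P; rewrite B1.
have Bz0 z : z \in Bs -> z = z0.
  have : (#|Bs| <= 1)%N by rewrite B1.
  by move/card_le1_eqP => H zB; apply: H.
have sB : (\sum_(z in Bs) cN z = cN z0)%N.
  by rewrite (big_pred1 z0) // => z; apply/idP/eqP => [/Bz0|->].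
have z0Z : z0 \in Zs by move: z0B; rewrite inE => /andP[].
have cz0 : (2 < cN z0)%N by move: z0B; rewrite inE => /andP[].
have full0 := Aw_full z0Z (ltac:(lia) : cN z0 = #|Np|).
have Zz0 z : z \in Zs -> z = z0.
  move=> zZ; case: (boolP (z \in Bs)) => [/Bz0 //|zB].
  have zQ : z \in Qs by rewrite inE zZ; move: zB; rewrite inE zZ.
  have cz := allQ z zQ.
  have [b bA] : exists b, b \in Aw z by apply/card_gt0P; rewrite -/(cN z) cz.
  have [a aA ab] := exists_other1 b (ltac:(rewrite -/(cN z) cz //) : (1 < #|Aw z|)%N).
  have [c [cA ca cb]] := exists_other2 a b cz0.
  move: aA bA cA; rewrite !inE => /andP[ua za] /andP[ub zb] /andP[uc z0c].
  have z0b : g z0 b by apply: full0; apply: Nb_Np.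
  exfalso; apply: (L4 (z:=z) (z':=z0) (a:=a) (b:=b) (c:=c)) => //; try by apply: Zs_Rr.
  by apply: contraNneq zB => ->.
have uz0 : ~~ g u z0 by move: z0Z; rewrite inE => /andP[/andP[]].
have cls x : x != u -> x != z0 -> g u x.
  move=> xu xz; apply/negPn/negP => ux; by move: (Zz0 x (RZ x xu ux)) => /eqP; rewrite (negbTE xz).
exists u, z0; split => //.
- by move: z0Z; rewrite inE eq_sym => /andP[/andP[]].
- move=> x xu xz; have ux := cls x xu xz; rewrite gsym ux /= gsym.
  by apply: full0; apply: Nb_Np.
- move=> x y xu xz yu yz; apply/negP => xy.
  have : inS y by rewrite /inS (cls y yu yz) /=; apply/existsP; exists x; rewrite (cls x xu xz).
  by rewrite (negbTE (noS y)).
Qed.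

End Local.

Lemma numeric (R : realType) (l sg P S Rr Z C : R) :
  0 <= l -> 0 <= sg -> 0 <= S -> 0 <= Rr -> 0 <= Z -> 0 <= C ->
  l * sg <= S + sg + Rr -> l ^+ 2 <= P + S + sg + Rr + C ->
  2 * (1 + P + S + Rr + Z) - 4 <= l ^+ 2 -> 6 <= 1 + P + S + Rr + Z ->
  [\/ P = 0, P = 1 | 2 <= P] -> (P = 0 -> C <= 0) -> (P = 1 -> C <= Z) ->
  (2 <= P -> C + 2 <= 2 * Z + P) ->
  [/\ S = 0, 2 <= P & 2 * Z + P <= C + 2].
Proof.
move=> l0 sg0 S0 R0 Z0 C0 lsg up lo n6 cs c0 c1 c2.
have l8 : 8 <= l ^+ 2 by clear -lo n6; lra.
have l14 : 14 / 5 <= l.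
  rewrite leNgt; apply/negP => H; move: l8; rewrite expr2 => l8.
  have h : 0 <= (14/5 - l) * l by apply: mulr_ge0 => //; lra.
  clear -h H l8 l0; lra.
have sg59 : 9 / 5 * sg <= S + Rr.
  have h : 0 <= (l - 14/5) * sg by apply: mulr_ge0 => //; lra.
  clear -h lsg; lra.
case: cs => [p0|p1|p2].
- exfalso; have := c0 p0; rewrite p0 in up lo n6 => c; clear -up lo n6 c sg59 S0 R0 Z0 sg0; lra.
- exfalso; have := c1 p1; rewrite p1 in up lo n6 => c; clear -up lo n6 c sg59 S0 R0 Z0 sg0; lra.
have c := c2 p2.
have SR : S + Rr <= 0 by clear -up lo c sg59 sg0; lra.
have Se : S = 0 by apply: le_anti; rewrite S0 andbT; clear -SR R0; lra.
split => //; clear -up lo SR S0 R0 sg59 sg0; lra.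
Qed.

Lemma card_sum (T : finType) (A : {set T}) : (\sum_i ((i \in A) : nat) = #|A|)%N.
Proof. by rewrite -sum1_card [RHS]big_mkcond /=; apply: eq_bigr => i _; case: (i \in A). Qed.

Lemma sub_sum_le (R : realType) (T : finType) (A B : {set T}) (F : T -> R) :
  (forall i, i \in A -> i \in B) -> (forall i, i \in B -> 0 <= F i) ->
  \sum_(i in A) F i <= \sum_(i in B) F i.
Proof.
move=> AB F0; rewrite big_mkcond [X in _ <= X]big_mkcond /=; apply: ler_sum => i _.
case: (boolP (i \in A)) => iA; first by rewrite (AB i iA).
by case: (boolP (i \in B)) => // /F0.
Qed.

Section Spec.
Variable R : realType.
Variable n : nat.
Variable g : rel 'I_n.
Hypothesis gsym : symmetric g.
Hypothesis girr : irreflexive g.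
Hypothesis NCC : ~ has_chorded_cycle g.
Variable u : 'I_n.
Variable y : 'I_n -> R.
Variable l : R.
Hypothesis y0 : forall i, 0 <= y i.
Hypothesis y1 : forall i, y i <= 1.
Hypothesis yu : y u = 1.
Hypothesis l0 : 0 <= l.
Definition nb j := \sum_i (g i j)%:R * y i.
Hypothesis hl : forall j, l * y j <= nb j.

Lemma count_n : n = (1 + #|Np g u| + #|Ss g u| + #|RS g u| + #|Zs g u|)%N.
Proof.
have E : forall i, (1 = (i \in [set u]) + (i \in Np g u) + (i \in Ss g u) + (i \in RS g u) + (i \in Zs g u))%N.
  move=> i; rewrite !inE /inS /hasS.
  case: (eqVneq i u) => [->|iu]; first by rewrite girr /=.
  by case: (g u i); case: [exists w, g u w && g w i]; case: [exists a, _].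
transitivity (\sum_(i : 'I_n) 1)%N; first by rewrite sum1_card card_ord.
by rewrite (eq_bigr _ (fun i _ => E i)) !big_split /= !card_sum cards1.
Qed.

Lemma card_Nb : #|Nb g u| = (#|Np g u| + #|Ss g u|)%N.
Proof.
rewrite -!card_sum -big_split /=; apply: eq_bigr => i _; rewrite !inE /inS.
by case: (g u i); case: [exists w, _].
Qed.

Lemma stepA : l ^+ 2 <= \sum_(v in Nb g u) nb v.
Proof.
have e1 : l ^+ 2 = l * (l * y u) by rewrite yu mulr1 expr2.
rewrite e1; apply: (le_trans (ler_wpM2l l0 (hl u))).
rewrite /nb mulr_sumr.
apply: (le_trans (y := \sum_i (g i u)%:R * nb i)).
  apply: ler_sum => i _; rewrite mulrCA; apply: ler_wpM2l; first by case: (g i u).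
  exact: hl.
rewrite [X in _ <= X]big_mkcond /=; apply: ler_sum => i _; rewrite inE gsym.
by case: (g u i); rewrite ?mul1r ?mul0r.
Qed.

Lemma stepB v : nb v <= 1 + \sum_(i in Nb g u) (g i v)%:R * y i + (\sum_(i in Rr g u) (g i v : nat))%:R.
Proof.
rewrite /nb (bigD1 u) //= yu mulr1 -addrA lerD //; first by case: (g u v).
rewrite (bigID (fun i => g u i)) /=; apply: lerD.
  rewrite [X in X <= _](eq_bigl (fun i => i \in Nb g u)) //.
  by move=> i; rewrite inE; case: (eqVneq i u) => [->|]; rewrite ?girr.
rewrite natr_sum [X in X <= _](eq_bigl (fun i => i \in Rr g u)); last by move=> i; rewrite inE.
apply: ler_sum => i _; case: (g i v); rewrite ?mul1r ?mul0r //.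
Qed.

Lemma sum_cN i : (\sum_(v in Nb g u) (g i v : nat) = cN g u i)%N.
Proof. by rewrite sum_nat_card /cN; apply: eq_card => v; rewrite !inE. Qed.

Definition sigma := \sum_(i in Ss g u) y i.

Lemma T2 : \sum_(v in Nb g u) \sum_(i in Nb g u) (g i v)%:R * y i <= sigma.
Proof.
rewrite exchange_big /=.
apply: (le_trans (y := \sum_(i in Nb g u) (if inS g u i then y i else 0))).
  apply: ler_sum => i; rewrite inE => ui.
  rewrite -mulr_suml -natr_sum sum_cN.
  case: (boolP (inS g u i)) => iS.
    have := L1 gsym girr NCC ui; case: (cN g u i) => [|[|//]] _; by rewrite ?mul0r ?mul1r.
  by rewrite (L1b gsym ui iS) mul0r.
rewrite /sigma [X in _ <= X]big_mkcond [X in X <= _]big_mkcond /=; apply: ler_sum => i _.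
rewrite !inE /inS; by case: (g u i).
Qed.

Lemma T3 : \sum_(v in Nb g u) (\sum_(i in Rr g u) (g i v : nat))%:R <= (#|RS g u| + Cs g u)%:R :> R.
Proof.
rewrite -natr_sum (ler_nat R) exchange_big /=.
rewrite (eq_bigr (fun i => cN g u i)); last by move=> i _; apply: sum_cN.
rewrite (bigID (hasS g u)) /=; apply: leq_add.
  rewrite -sum1_card.
  rewrite [X in (_ <= X)%N](eq_bigl (fun i => (i \in Rr g u) && hasS g u i)); last by move=> i; rewrite !inE.
  by apply: leq_sum => i /andP[iR hS]; apply: (L2 gsym girr NCC iR hS).
rewrite /Cs; apply: eq_leq; apply: eq_bigl => i; by rewrite !inE.
Qed.

Lemma T4 : (\sum_(w in Ss g u) \sum_(i in Rr g u) (g i w : nat) <= #|RS g u|)%N.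
Proof.
rewrite exchange_big /=.
apply: (leq_trans (n := \sum_(i in Rr g u) (hasS g u i : nat))).
  apply: leq_sum => i iR; rewrite sum_nat_card.
  case: (boolP (hasS g u i)) => hS.
    apply: (leq_trans _ (L2 gsym girr NCC iR hS)); apply: subset_leq_card.
    by apply/subsetP => w; rewrite !inE /inS => /andP[/andP[-> _] ->].
  rewrite leqn0 cards_eq0; apply/eqP/setP => w; rewrite !inE.
  apply/negP => /andP[wS iw]; move/negP: hS; apply; apply/existsP; exists w.
  by rewrite gsym iw andbT; move: wS; rewrite ?inE.
by rewrite sum_nat_card; apply: eq_leq; apply: eq_card => i; rewrite !inE.
Qed.

Lemma sigma_bound : l * sigma <= #|Ss g u|%:R + sigma + #|RS g u|%:R.
Proof.
rewrite /sigma mulr_sumr.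
apply: (le_trans (ler_sum _ (fun i _ => hl i))).
apply: (le_trans (ler_sum _ (fun i _ => stepB i))).
rewrite !big_split /= sumr_const -!addrA; apply: lerD => //.
apply: lerD.
  apply: (le_trans _ T2); apply: sub_sum_le.
    by move=> i; rewrite !inE /inS => /andP[].
  by move=> i _; apply: sumr_ge0 => j _; apply: mulr_ge0 => //; case: (g j i).
by rewrite -natr_sum (ler_nat R) T4.
Qed.

Lemma main_struct : (6 <= n)%N -> 2 * n%:R - 4 <= l ^+ 2 -> exists h1 h2, hubs g h1 h2.
Proof.
move=> n6 lo.
have cnt := count_n.
have up : l ^+ 2 <= #|Np g u|%:R + #|Ss g u|%:R + sigma + #|RS g u|%:R + (Cs g u)%:R.
  apply: (le_trans stepA).
  apply: (le_trans (ler_sum _ (fun i _ => stepB i))).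
  rewrite !big_split /= sumr_const card_Nb natrD -!addrA.
  apply: lerD => //; apply: lerD => //; apply: lerD; first exact: T2.
  by have := T3; rewrite natrD.
have sg0 : 0 <= sigma by apply: sumr_ge0.
have lo' : 2 * (1 + #|Np g u|%:R + #|Ss g u|%:R + #|RS g u|%:R + #|Zs g u|%:R) - 4 <= l ^+ 2.
  by move: lo; rewrite {1}cnt !natrD.
have n6' : 6 <= 1 + #|Np g u|%:R + #|Ss g u|%:R + #|RS g u|%:R + #|Zs g u|%:R :> R.
  by rewrite -(natrD R 1) -!natrD -cnt (ler_nat R 6).
have cs : [\/ #|Np g u|%:R = 0 :> R, #|Np g u|%:R = 1 :> R | 2 <= #|Np g u|%:R :> R].
  case: (#|Np g u|) => [|[|k]]; [by apply: Or31 | by apply: Or32 | apply: Or33].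
  by rewrite (ler_nat R 2).
have Cpz := Cpz gsym u.
have c0 : #|Np g u|%:R = 0 :> R -> (Cs g u)%:R <= 0 :> R.
  move/eqP; rewrite pnatr_eq0 => /eqP p0; move: Cpz; rewrite p0 mul0n leqn0 => /eqP ->.
  by [].
have c1 : #|Np g u|%:R = 1 :> R -> (Cs g u)%:R <= #|Zs g u|%:R :> R.
  move/eqP; rewrite pnatr_eq1 => /eqP p1; move: Cpz; rewrite p1 mul1n; by rewrite (ler_nat R).
have c2 : 2 <= #|Np g u|%:R :> R -> (Cs g u)%:R + 2 <= 2 * #|Zs g u|%:R + #|Np g u|%:R :> R.
  rewrite (ler_nat R 2) => /(Cbound gsym girr NCC (u:=u)).
  by rewrite -(ler_nat R) (natrD _ (Cs g u) 2) (natrD _ (2 * _) _) natrM.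
have [S0 P2 tight] := numeric l0 sg0 (ler0n R _) (ler0n R _) (ler0n R _) (ler0n R _)
  sigma_bound up lo' n6' cs c0 c1 c2.
have noS : forall v, ~~ inS g u v.
  move: S0 => /eqP; rewrite pnatr_eq0 => /eqP /card0_eq H v.
  by have := H v; rewrite inE => ->.
apply: (Ctight gsym girr NCC noS).
  by move: P2; rewrite (ler_nat R 2).
by move: tight; rewrite -(ler_nat R) (natrD _ (Cs g u) 2) (natrD _ (2 * _) _) natrM.
Qed.

End Spec.

Lemma hub_iso n (g : rel 'I_n) h1 h2 : symmetric g -> irreflexive g -> (2 <= n)%N ->
  hubs g h1 h2 -> graph_iso g (@K2 n).
Proof.
move=> gsym girr n2 [h12 nh adj nadj].
pose o0 : 'I_n := Ordinal (ltnW n2).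
pose o1 : 'I_n := Ordinal n2.
have o01 : o0 != o1 by [].
pose s1 := tperm h1 o0.
pose h2' := s1 h2.
pose s2 := tperm h2' o1.
pose f := (s1 * s2)%g.
have fh1 : f h1 = o0.
  rewrite /f permM /s1 tpermL /s2 tpermD //.
  rewrite /h2' -{1}(tpermL h1 o0) -/s1; apply/negP => /eqP /perm_inj /eqP.
  by rewrite eq_sym (negbTE h12).
have fh2 : f h2 = o1 by rewrite /f permM -/h2' /s2 tpermL.
have fH i : ((f i < 2)%N) = ((i == h1) || (i == h2)).
  apply/idP/idP.
    move=> lt2; have : (f i == o0) || (f i == o1).
      by rewrite -!val_eqE /=; move: lt2; case: (nat_of_ord (f i)) => [|[|]].
    by rewrite -{1}fh1 -fh2 !(inj_eq perm_inj).
  by case/orP => /eqP ->; rewrite ?fh1 ?fh2.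
exists f => i j; rewrite /K2 !fH.
case: (eqVneq i h1) => [->|ih1]; case: (eqVneq j h1) => [->|jh1] //=;
  rewrite ?girr //.
- case: (eqVneq j h2) => [->|jh2] //=; first by rewrite (negbTE nh).
  by case/andP: (adj j jh1 jh2) => + _; rewrite gsym.
- case: (eqVneq i h2) => [->|ih2] //=; first by rewrite gsym (negbTE nh).
  by case/andP: (adj i ih1 ih2).
- case: (eqVneq i h2) => [->|ih2]; case: (eqVneq j h2) => [->|jh2] //=; rewrite ?girr //.
  + by case/andP: (adj j jh1 jh2) => _; rewrite gsym.
  + by case/andP: (adj i ih1 ih2).
  + by apply/negbTE/nadj.
Qed.

Lemma K2_eig (R : realType) n : (3 <= n)%N ->
  eigenvalue (adjmx R (@K2 n)) (Num.sqrt (2 * (n - 2)%:R)).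
Proof.
move=> n3; have n2 : (2 <= n)%N by apply: ltnW.
set mu := Num.sqrt _.
have mu2 : mu * mu = 2 * (n - 2)%:R by rewrite -expr2 sqr_sqrtr // mulr_ge0.
apply/eigenvalueP; exists (\row_(j < n) (if (j < 2)%N then mu else 2)).
  apply/rowP => j; rewrite !mxE.
  pose F (k : nat) := (if (k < 2)%N then mu else 2) * (((k < 2)%N != (j < 2)%N) : nat)%:R.
  under eq_bigr => i _ do rewrite !mxE.
  rewrite -/(\sum_(i < n) F i) -(big_mkord xpredT F) (@big_cat_nat _ _ _ 2 0 n _ _ (leq0n 2) n2) /=.
  rewrite big_nat_recr //= big_nat_recr //= big_nil add0r.
  rewrite (eq_big_nat _ _ (F2 := fun _ => F 2%N)); last first.
    by move=> i /andP[i2 _]; rewrite /F ltnNge i2 /=.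
  rewrite sumr_const_nat /F /=.
  case: (ltnP j 2) => j2 /=; rewrite ?mulr0 ?mulr1 ?add0r ?addr0.
    by rewrite mulrC mu2 mulr_natr.
  by rewrite mul0rn addr0 mulr_natr mulr2n.
apply/eqP => /rowP /(_ (Ordinal n3)); rewrite !mxE /=.
by move/eqP; rewrite pnatr_eq0.
Qed.

Lemma perron_ish (R : realType) n (g : rel 'I_n) (r : R) : 0 <= r ->
  eigenvalue (adjmx R g) r ->
  exists u (y : 'I_n -> R), [/\ (forall i, 0 <= y i), (forall i, y i <= 1), y u = 1 &
     forall j, r * y j <= nb g y j].
Proof.
move=> r0 /eigenvalueP [v vA v0].
pose a i := `|v 0 i|.
have [i1 vi1] : exists i1, v 0 i1 != 0.
  case: (boolP [exists i, v 0 i != 0]) => [/existsP //|/existsPn H]; exfalso.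
  move/eqP: v0; apply; apply/rowP => i; rewrite mxE; apply/eqP; move: (H i); by rewrite negbK.
case: (arg_maxP a (P := predT) (i0 := i1) isT) => u _ umax.
have au0 : 0 < a u by apply: (lt_le_trans _ (umax i1 isT)); rewrite normr_gt0.
exists u, (fun i => a i / a u); split.
- by move=> i; rewrite /a divr_ge0 ?normr_ge0.
- by move=> i; rewrite ler_pdivrMr // mul1r; apply: umax.
- by rewrite divff // gt_eqF.
move=> j; rewrite /nb.
under eq_bigr => i _ do rewrite mulrA.
rewrite -mulr_suml mulrA; apply: ler_wpM2r; first by rewrite invr_ge0 ltW.
have e : r * v 0 j = \sum_i v 0 i * (g i j)%:R.
  by have := congr1 (fun M : 'M[R]_(1, n) => M 0 j) vA; rewrite /= !mxE => <-; apply: eq_bigr => i _; rewrite mxE.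
have : `|r * v 0 j| <= \sum_i `|v 0 i * (g i j)%:R| by rewrite e ler_norm_sum.
rewrite normrM ger0_norm // => H; apply: (le_trans H).
by apply: ler_sum => i _; rewrite normrM normr_nat mulrC.
Qed.

Unset Implicit Arguments.
Theorem theorem1p1 (R : realType) (n : nat) (g : rel 'I_n) (rG rK : R) :
  (6 <= n)%N -> simple_graph g ->
  is_spectral_radius (adjmx R g) rG ->
  is_spectral_radius (adjmx R (@K2 n)) rK ->
  rK <= rG ->
  has_chorded_cycle g \/ graph_iso g (@K2 n).
Proof.
move=> n6 [gsym girr] [eG _] [_ maxK] le.
case: (classic (has_chorded_cycle g)) => [H|NCC]; [by left | right].
have n3 : (3 <= n)%N by apply: leq_trans n6.
have n2 : (2 <= n)%N by apply: leq_trans n6.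
set mu := Num.sqrt (2 * (n - 2)%:R : R).
have muK : mu <= rK := maxK _ (K2_eig R n3).
have mu0 : 0 <= mu := sqrtr_ge0 _.
have r0 : 0 <= rG by apply: le_trans le; apply: le_trans muK.
have [u [y [y0 y1 yu hl]]] := perron_ish r0 eG.
have lo : 2 * n%:R - 4 <= rG ^+ 2.
  have mr : mu <= rG by apply: le_trans le.
  have : mu * mu <= rG * rG by apply: ler_pM.
  rewrite -expr2 sqr_sqrtr ?mulr_ge0 // natrB // -expr2.
  by rewrite mulrBr; congr (_ - _ <= _); rewrite -natrM.
have [h1 [h2 H]] := main_struct gsym girr NCC y0 y1 yu r0 hl n6 lo.
exact: hub_iso gsym girr n2 H.
Qed.
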